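(* Let $G$ be a finite, simple, undirected graph of chromatic number $3$, and let $D$ be an orientation of $G$. Then there is a $3$-coloring $f$ of $G$ such that $D$ contains a directed full $f$-rainbow path, i.e. a directed path $v_1v_2v_3$ in $D$ (with arcs $(v_1,v_2)$ and $(v_2,v_3)$) whose three vertices receive three distinct colors under $f$.
   Context: A $3$-coloring of $G$ is a function $f:V(G)\to\{1,2,3\}$ with $f(u)\neq f(v)$ for every two adjacent vertices $u,v$. An orientation of $G$ is a digraph obtained by replacing each edge $uv$ by exactly one of the arcs $(u,v)$ or $(v,u)$. For a $k$-coloring $f$, a full $f$-rainbow path is a path of order $k$ whose vertices have pairwise distinct colors. *)

(* Defs.v *)
From mathcomp Require Import all_boot.
Set Implicit Arguments. Unset Strict Implicit. Unset Printing Implicit Defensive.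

Definition simple_graph (T : finType) (e : rel T) : Prop :=
  symmetric e /\ irreflexive e.

Definition proper_coloring (T : finType) (e : rel T) (k : nat) (f : T -> 'I_k) : Prop :=
  forall u v, e u v -> f u != f v.

Definition k_colorable (T : finType) (e : rel T) (k : nat) : Prop :=
  exists f : T -> 'I_k, proper_coloring e f.

Definition chromatic_number_eq (T : finType) (e : rel T) (k : nat) : Prop :=
  k_colorable e k /\ forall j, j < k -> ~ k_colorable e j.

Definition orientation (T : finType) (e : rel T) (D : rel T) : Prop :=
  (forall u v, D u v -> e u v) /\
  (forall u v, e u v -> (D u v && ~~ D v u) || (D v u && ~~ D u v)).

Definition has_directed_rainbow_P3 (T : finType) (D : rel T) (f : T -> 'I_3) : Prop :=
  exists v1 v2 v3 : T,
    [/\ D v1 v2, D v2 v3 & [/\ f v1 != f v2, f v2 != f v3 & f v1 != f v3]].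

(* Main.v *)
Require Import Defs.
From mathcomp Require Import all_boot.
From Stdlib Require Import Classical.

Lemma third (a b : 'I_3) : exists t : 'I_3, t != a /\ t != b.
Proof.
case: a b => [[|[|[|a]]] Ha] [[|[|[|b]]] Hb] //;
  first [ by exists (@Ordinal 3 0 isT) | by exists (@Ordinal 3 1 isT)
        | by exists (@Ordinal 3 2 isT) ].
Qed.

Theorem theorem4 (T : finType) (e D : rel T) :
  simple_graph e -> chromatic_number_eq e 3 -> orientation e D ->
  exists f : T -> 'I_3, proper_coloring e f /\ has_directed_rainbow_P3 D f.
Proof.
move=> [esym eirr] [[f fP] nocol] [De Dor].
have Dirr : forall x, ~~ D x x.
  by move=> x; apply/negP => /De; rewrite eirr.
have Dasym : forall x y, D x y -> ~~ D y x.
  move=> x y Dxy; have := Dor _ _ (De _ _ Dxy).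
  by rewrite Dxy /= andbF orbF.
pose hasIn v := [exists u, D u v].
pose hasOut v := [exists w, D v w].
pose mid v := hasIn v && hasOut v.
case: (boolP [exists x, exists y, [&& D x y, mid x & mid y]]).
- case/existsP => x /existsP [y /and3P [Dxy /andP [/existsP [a Dax] _]
                                       /andP [_ /existsP [b Dyb]]]].
  case: (classic (has_directed_rainbow_P3 D f)) => Hr.
    by exists f.
  have mono : forall p v q, D p v -> D v q -> f p = f q.
    move=> p v q Dpv Dvq; apply/eqP; apply/negPn/negP => Hpq; apply: Hr.
    by exists p, v, q; split => //; split => //; apply: fP; apply: De.
  have [t [tx ty]] := third (f x) (f y).
  exists (fun z => if z == x then t else f z); split.
  + have key : forall v, e x v -> v != x -> t != f v.
      move=> v exv _; case/orP: (Dor _ _ exv) => /andP [Dxv _].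
        by rewrite -(mono a x v Dax Dxv) (mono a x y Dax Dxy).
      by rewrite (mono v x y Dxv Dxy).
    move=> u v euv /=.
    case: (eqVneq u x) => [ux|ux]; case: (eqVneq v x) => [vx|vx].
    * by move: euv; rewrite ux vx eirr.
    * by apply: key => //; move: euv; rewrite ux.
    * by rewrite eq_sym; apply: key => //; rewrite esym -vx.
    * exact: fP.
  + exists x, y, b; rewrite eqxx.
    have yx : (y == x) = false by apply/eqP => yx; move: Dxy; rewrite yx (negbTE (Dirr x)).
    have bx : (b == x) = false.
      by apply/eqP => bx; move: Dyb; rewrite bx (negbTE (Dasym _ _ Dxy)).
    rewrite yx bx; split => //; split.
    * done.
    * by apply: fP; apply: De.
    * by rewrite -(mono x y b Dxy Dyb).
- move=> nomm.
  have nm : forall x y, D x y -> mid x -> mid y -> False.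
    move=> x y Dxy mx my; move/negP: nomm; apply.
    by apply/existsP; exists x; apply/existsP; exists y; rewrite Dxy mx my.
  case: (boolP [exists v, mid v]).
  + case/existsP => v /andP [/existsP [p Dpv] /existsP [q Dvq]].
    pose g z := if ~~ hasIn z then @Ordinal 3 0 isT
                else if ~~ hasOut z then @Ordinal 3 1 isT else @Ordinal 3 2 isT.
    have gP : forall u w, D u w -> g u != g w.
      move=> u w Duw.
      have iw : hasIn w by apply/existsP; exists u.
      have ou : hasOut u by apply/existsP; exists w.
      rewrite /g iw ou /=.
      case: (boolP (hasIn u)) => iu /=; case: (boolP (hasOut w)) => ow //=.
      by exfalso; apply: (nm u w) => //; rewrite /mid ?iu ?ou ?iw ?ow.
    exists g; split.
      move=> u w euw; case/orP: (Dor _ _ euw) => /andP [Duw _].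
        exact: gP.
      by rewrite eq_sym; apply: gP.
    have mv : mid v by rewrite /mid; apply/andP; split; apply/existsP; [exists p|exists q].
    have ip : ~~ hasIn p.
      apply/negP => ip; apply: (nm p v Dpv) => //.
      by rewrite /mid ip; apply/existsP; exists v.
    have oq : ~~ hasOut q.
      apply/negP => oq; apply: (nm v q Dvq) => //.
      by rewrite /mid oq andbT; apply/existsP; exists v.
    have iq : hasIn q by apply/existsP; exists v.
    exists p, v, q; split => //.
    by rewrite /g ip iq oq /=; move: mv => /andP [-> ->].
  + move=> nomid; exfalso; apply: (nocol 2) => //.
    exists (fun z => if hasIn z then @Ordinal 2 1 isT else @Ordinal 2 0 isT).
    have gP : forall u w, D u w ->
       (if hasIn u then @Ordinal 2 1 isT else @Ordinal 2 0 isT) !=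
       (if hasIn w then @Ordinal 2 1 isT else @Ordinal 2 0 isT).
      move=> u w Duw.
      have iw : hasIn w by apply/existsP; exists u.
      rewrite iw; case: (boolP (hasIn u)) => // iu.
      move/negP: nomid; case; apply/existsP; exists u.
      by rewrite /mid iu; apply/existsP; exists w.
    move=> u w euw; case/orP: (Dor _ _ euw) => /andP [Duw _].
      exact: gP.
    by rewrite eq_sym; apply: gP.
Qed.
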